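(* Let $\mathcal{C}$ be a binary linear code with minimum distance $d(\mathcal{C}) \le 3$. Then every parity-check matrix $H$ for $\mathcal{C}$ satisfies $s(H) = d(\mathcal{C})$, and therefore $\rho(\mathcal{C}) = r(\mathcal{C})$.
   Context: A parity-check matrix for a linear code $\mathcal{C}$ is any matrix (possibly with linearly dependent rows) whose rows span the dual code $\mathcal{C}^\perp$. $d(\mathcal{C})$ is the minimum Hamming distance. For a parity-check matrix $H$, the stopping distance $s(H)$ is the largest integer such that for every set of $s(H)-1$ or fewer columns of $H$, the projection of $H$ onto those columns contains at least one row of Hamming weight exactly one. The redundancy $r(\mathcal{C})$ is the minimum number of rows of a parity-check matrix for $\mathcal{C}$ (i.e. $n-\dim\mathcal{C}$). The stopping redundancy $\rho(\mathcal{C})$ is the smallest number of rows of a parity-check matrix $H$ for $\mathcal{C}$ with $s(H) = d(\mathcal{C})$. *)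

(* Defs.v *)
From HB Require Import structures.
From mathcomp Require Import all_boot all_order all_algebra all_fingroup.
Set Implicit Arguments. Unset Strict Implicit. Unset Printing Implicit Defensive.
Import GRing.Theory.
Local Open Scope ring_scope.

(* A binary linear code of length n is represented by a (generator) matrix
   G : 'M['F_2]_(k, n); the code is the row space of G. *)

Definition wt (n : nat) (v : 'rV['F_2]_n) : nat := #|[set j | v 0 j != 0]|.

Definition codeword (k n : nat) (G : 'M['F_2]_(k, n)) (c : 'rV['F_2]_n) : bool :=
  (c <= G)%MS.

Definition dual_code (k n : nat) (G : 'M['F_2]_(k, n)) : 'M['F_2]_n :=
  kermx G^T.

(* H is a parity-check matrix for the code: its rows span the dual code
   (rows may be linearly dependent). *)
Definition parity_check (k n m : nat) (G : 'M['F_2]_(k, n)) (H : 'M['F_2]_(m, n))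
  : bool := (H == dual_code G)%MS.

Definition is_min_dist (k n : nat) (G : 'M['F_2]_(k, n)) (d : nat) : Prop :=
  (exists2 c, codeword G c & (c != 0) && (wt c == d)) /\
  (forall c, codeword G c -> c != 0 -> (d <= wt c)%N).

Definition redundancy (k n : nat) (G : 'M['F_2]_(k, n)) : nat := (n - \rank G)%N.

Definition has_weight_one_row (m n : nat) (H : 'M['F_2]_(m, n)) (S : {set 'I_n})
  : bool := [exists i, #|[set j in S | H i j != 0]| == 1%N].

Definition stop_ok (m n : nat) (H : 'M['F_2]_(m, n)) (s : nat) : Prop :=
  forall S : {set 'I_n}, (0 < #|S|)%N -> (#|S| <= s.-1)%N -> has_weight_one_row H S.

Definition is_stopping_distance (m n : nat) (H : 'M['F_2]_(m, n)) (s : nat) : Prop :=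
  stop_ok H s /\ (forall t, stop_ok H t -> (t <= s)%N).

Definition is_stopping_redundancy (k n : nat) (G : 'M['F_2]_(k, n)) (d rho : nat)
  : Prop :=
  (exists H : 'M['F_2]_(rho, n), parity_check G H /\ is_stopping_distance H d) /\
  (forall m (H : 'M['F_2]_(m, n)), parity_check G H -> is_stopping_distance H d ->
     (rho <= m)%N).

(* Main.v *)
Require Import Defs.
From mathcomp Require Import all_boot all_order all_algebra all_fingroup.
From mathcomp Require Import zify.
Import GRing.Theory.
Local Open Scope ring_scope.
Set Implicit Arguments. Unset Strict Implicit.
Lemma F2_1 (x : 'F_2) : x != 0 -> x = 1.
Proof. case: x => [[|[|i]]] //= Hi _; exact/val_inj. Qed.
Lemma F2_2 : (2%:R : 'F_2) = 0. Proof. by apply/val_inj. Qed.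

Lemma key k n m (G : 'M['F_2]_(k, n)) (H : 'M['F_2]_(m, n)) v :
  parity_check G H -> v *m H^T = 0 -> codeword G v.
Proof.
move=> /andP[_ HK] vH; rewrite /codeword submxE.
have : ((cokermx G)^T <= H)%MS.
  apply: submx_trans HK; apply/sub_kermxP.
  by rewrite -trmx_mul mulmx_coker trmx0.
case/submxP=> D /(congr1 trmx); rewrite trmxK trmx_mul => ->.
by rewrite mulmxA vH mul0mx.
Qed.

Lemma dual0 k n m (G : 'M['F_2]_(k, n)) (H : 'M['F_2]_(m, n)) c :
  parity_check G H -> codeword G c -> c *m H^T = 0.
Proof.
move=> /andP[HK _] /submxP[D ->].
have : H *m G^T = 0 by apply/sub_kermxP.
move/(congr1 trmx); rewrite trmx_mul trmxK trmx0 => E.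
by rewrite -mulmxA E mulmx0.
Qed.

Lemma sum_count n (S : {set 'I_n}) (h : 'I_n -> 'F_2) :
  \sum_j (j \in S)%:R * h j = #|[set j in S | h j != 0]|%:R.
Proof.
rewrite -sumr_const (big_mkcond (fun j => j \in _)) /=.
apply: eq_bigr => j _; rewrite inE.
case: (j \in S); rewrite /= ?mul0r ?mul1r //.
by case: eqP => [->|/eqP/F2_1 ->].
Qed.

Lemma part1 k n (G : 'M['F_2]_(k, n)) (d : nat) :
  is_min_dist G d -> (d <= 3)%N ->
  forall m (H : 'M['F_2]_(m, n)), parity_check G H -> is_stopping_distance H d.
Proof.
move=> [[c cG /andP[c0 /eqP wc]] dmin] d3 m H pc; split.
- move=> S S0 Sd; rewrite /has_weight_one_row; apply: contraT => /existsPn Hno.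
  pose v : 'rV['F_2]_n := \row_j (j \in S)%:R.
  have vH : v *m H^T = 0.
    apply/matrixP => i0 i; rewrite !mxE.
    rewrite (eq_bigr (fun j => (j \in S)%:R * H i j)); last by move=> j _; rewrite !mxE.
    rewrite sum_count.
    have := Hno i; have : (#|[set j in S | H i j != 0%R]| <= #|S|)%N.
      by apply: subset_leq_card; apply/subsetP => j; rewrite inE => /andP[].
    move: #|_| => x xS; have : (x <= 2)%N by apply: leq_trans xS (leq_trans Sd _); case: d d3 {dmin wc Sd} => [|[|[|[|]]]].
    by case: x {xS} => [|[|[|]]] //= _ _; rewrite F2_2.
  have vG := key pc vH.
  have v0 : v != 0.
    case/card_gt0P: S0 => j jS; apply/eqP => /matrixP /(_ 0 j); rewrite !mxE jS.
    by move/eqP; rewrite oner_eq0.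
  have := dmin v vG v0.
  have -> : wt v = #|S|.
    rewrite /wt; apply: eq_card => j; rewrite inE mxE.
    by case: (j \in S); rewrite ?eqxx ?oner_eq0.
  move=> dS; lia.
- move=> t st; rewrite leqNgt; apply/negP => dt.
  pose S := [set j | c 0 j != 0].
  have cS : #|S| = d by [].
  have S0 : (0 < #|S|)%N.
    apply/card_gt0P; apply/existsP; apply: contraR c0 => /existsPn Hn.
    apply/eqP/matrixP => i j; rewrite ord1 mxE; have := Hn j; rewrite inE.
    by move/negPn/eqP.
  have dt2 : (#|S| <= t.-1)%N by rewrite cS; lia.
  have := st S S0 dt2 => /existsP[i].
  case/cards1P => j0 Ej0.
  have := dual0 pc cG => /matrixP /(_ 0 i); rewrite !mxE.
  rewrite (bigD1 j0) //= big1.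
    have : j0 \in [set j in S | H i j != 0] by rewrite Ej0 set11.
    rewrite !inE => /andP[/F2_1 -> /F2_1]; rewrite mxE => ->.
    by rewrite addr0 mulr1 => /eqP; rewrite oner_eq0.
  move=> j jj0; rewrite mxE.
  have : j \notin [set j in S | H i j != 0] by rewrite Ej0 inE.
  rewrite !inE negb_and !negbK => /orP[/eqP -> | /eqP ->]; by rewrite ?mul0r ?mulr0.
Qed.

Unset Implicit Arguments.
Theorem theorem3 (k n : nat) (G : 'M['F_2]_(k, n)) (d : nat) :
  is_min_dist G d -> (d <= 3)%N ->
  (forall m (H : 'M['F_2]_(m, n)), parity_check G H -> is_stopping_distance H d) /\
  is_stopping_redundancy G d (redundancy G).
Proof.
move=> md d3; have P1 := part1 md d3; split => //.
have rk : \rank (dual_code G) = redundancy G.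
  by rewrite /dual_code /redundancy mxrank_ker mxrank_tr.
have pcH : parity_check G (castmx (rk, erefl n) (row_base (dual_code G))).
  by rewrite /parity_check; apply/eqmxP; apply: eqmx_trans (eqmx_cast _ _) (eq_row_base _).
split; first by exists (castmx (rk, erefl n) (row_base (dual_code G))); split => //; apply: P1.
move=> m H pc _; rewrite -rk.
move/eqmxP: pc => <-; exact: rank_leq_row.
Qed.
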